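(* There exists an infinite family of digraphs $\{X_j\}_{j=1}^{\infty}$ such that the diameter of $\Gamma(X_j)$ tends to $\infty$ as $j\to\infty$, while each $H(X_j)$ has exactly three distinct eigenvalues.
   Context: A digraph $X$ has a finite vertex set and an arc set of ordered pairs of distinct vertices. The underlying graph $\Gamma(X)$ is the simple graph with an edge $\{x,y\}$ whenever $xy$ or $yx$ is an arc. The Hermitian adjacency matrix $H(X)$ has $(u,v)$-entry $1$ if $uv$ and $vu$ are arcs, $i$ if only $uv$ is an arc, $-i$ if only $vu$ is an arc, and $0$ otherwise. *)

(* Defs.v *)
From HB Require Import structures.
From mathcomp Require Import all_boot all_order all_algebra.
From mathcomp Require Import algC.
Set Implicit Arguments. Unset Strict Implicit. Unset Printing Implicit Defensive.
Import Order.TTheory GRing.Theory Num.Theory.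

Record digraph := Digraph {
  dnv : nat;
  darc : rel 'I_dnv;
  darc_irr : irreflexive darc }.

Definition und_adj (X : digraph) : rel 'I_(dnv X) :=
  fun x y => @darc X x y || @darc X y x.

Definition hermAdj (X : digraph) : 'M[algC]_(dnv X) :=
  \matrix_(u, v)
    (if @darc X u v && @darc X v u then 1
     else if @darc X u v then 'i
     else if @darc X v u then - 'i else 0)%R.

Definition n_distinct_eigenvalues (n : nat) (M : 'M[algC]_n) (k : nat) : Prop :=
  exists s : seq algC, [/\ uniq s, size s = k &
    forall a : algC, eigenvalue M a <-> a \in s].

Fixpoint ball (T : finType) (e : rel T) (u : T) (k : nat) : {set T} :=
  if k is k'.+1 then
    let B := ball e u k' in B :|: [set y | [exists x in B, e x y]]
  else [set u].

(* Graph distance (least k with v in ball u k); equals #|T| if unreachable. *)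
Definition gdist (T : finType) (e : rel T) (u v : T) : nat :=
  find (fun k => v \in ball e u k) (iota 0 #|T|).

Definition gdiameter (T : finType) (e : rel T) : nat :=
  \max_(u : T) \max_(v : T) gdist e u v.

Definition gconnected (T : finType) (e : rel T) : Prop :=
  forall u v : T, connect e u v.

Arguments und_adj : clear implicits.
Arguments hermAdj : clear implicits.

(* Main.v *)
Require Import Defs.
From HB Require Import structures.
From mathcomp Require Import all_boot all_order all_algebra.
From mathcomp Require Import algC fingroup perm.
From mathcomp Require Import ring zify.
Set Implicit Arguments. Unset Strict Implicit. Unset Printing Implicit Defensive.
Import Order.TTheory GRing.Theory Num.Theory.
Local Open Scope ring_scope.

Definition mproj m n (k : 'I_(m*n)) : 'I_m * 'I_n :=
  enum_val (cast_ord (esym (mxvec_cast m n)) k).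
HB.lock Definition kron (R : comPzRingType) m1 m2 n1 n2 (A : 'M[R]_(m1,m2)) (B : 'M[R]_(n1,n2))
  : 'M[R]_(m1*n1, m2*n2) :=
  \matrix_(x, y) (A (mproj x).1 (mproj y).1 * B (mproj x).2 (mproj y).2).
Section Kron.
Variable R : comPzRingType.
Lemma mprojK m n (i : 'I_m) (j : 'I_n) : mproj (mxvec_index i j) = (i,j).
Proof. by rewrite /mproj /mxvec_index cast_ordK enum_rankK. Qed.


Lemma kronE m1 m2 n1 n2 (A : 'M[R]_(m1,m2)) (B : 'M[R]_(n1,n2)) i j k l :
  kron A B (mxvec_index i j) (mxvec_index k l) = A i k * B j l.
Proof. by rewrite unlock mxE !mprojK. Qed.

Lemma kron_mul m1 m2 m3 n1 n2 n3 (A : 'M[R]_(m1,m2)) (B : 'M[R]_(n1,n2))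
  (C : 'M[R]_(m2,m3)) (D : 'M[R]_(n2,n3)) :
  kron A B *m kron C D = kron (A *m C) (B *m D).
Proof.
apply/matrixP=> x y; case/mxvec_indexP: x => i j; case/mxvec_indexP: y => k l.
rewrite kronE !mxE.
rewrite (reindex (uncurry (@mxvec_index m2 n2))) /=; last first.
  by case: (curry_mxvec_bij m2 n2) => g g1 g2; exists g => x _; [apply: g1|apply: g2].
rewrite big_distrlr /= pair_bigA /=; apply: eq_bigr => [[a b]] _ /=.
rewrite !kronE; ring.
Qed.

Lemma kronDl m1 m2 n1 n2 (A A' : 'M[R]_(m1,m2)) (B : 'M[R]_(n1,n2)) :
  kron (A + A') B = kron A B + kron A' B.
Proof. by apply/matrixP=> x y; rewrite unlock !mxE mulrDl. Qed.
Lemma kronDr m1 m2 n1 n2 (A : 'M[R]_(m1,m2)) (B B' : 'M[R]_(n1,n2)) :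
  kron A (B + B') = kron A B + kron A B'.
Proof. by apply/matrixP=> x y; rewrite unlock !mxE mulrDr. Qed.
Lemma kronZr m1 m2 n1 n2 (A : 'M[R]_(m1,m2)) (B : 'M[R]_(n1,n2)) c :
  kron A (c *: B) = c *: kron A B.
Proof. by apply/matrixP=> x y; rewrite unlock !mxE mulrCA. Qed.
Lemma kron0r m1 m2 n1 n2 (A : 'M[R]_(m1,m2)) :
  kron A (0 : 'M[R]_(n1,n2)) = 0.
Proof. by apply/matrixP=> x y; rewrite unlock !mxE mulr0. Qed.
End Kron.
Lemma kron_mulr (R : comPzRingType) m2 m3 n2 n3 (a : 'rV[R]_m2) (b : 'rV[R]_n2)
  (C : 'M[R]_(m2,m3)) (D : 'M[R]_(n2,n3)) :
  ((kron a b : 'rV_(m2*n2)) *m kron C D) = (kron (a *m C) (b *m D) : 'rV_(m3*n3)).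
Proof. exact: (@kron_mul R 1 m2 m3 1 n2 n3 a b C D). Qed.
Lemma kronE_row (R : comPzRingType) m2 n2 (a : 'rV[R]_m2) (b : 'rV[R]_n2) i j :
  (kron a b : 'rV_(m2*n2)) 0 (mxvec_index i j) = a 0 i * b 0 j.
Proof. by rewrite unlock mxE mprojK; case: (mproj _) => i0 j0 /=; rewrite (ord1 i0) (ord1 j0). Qed.


Definition Bm : 'M[algC]_3 :=
  \matrix_(a, b) (if val b == 0%N then 'i else if val b == 1%N then - 'i else 0).
Definition Bc : 'M[algC]_3 :=
  \matrix_(a, b) (if val a == 0%N then - 'i else if val a == 1%N then 'i else 0).

Ltac c3 := apply/matrixP; case => [[|[|[|//]]] ?]; case => [[|[|[|//]]] ?];
  rewrite !(mxE, big_ord_recr, big_ord0) /=;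
  rewrite ?(mulr0, mul0r, addr0, add0r, mulrDl, mulrDr, mulrN, mulNr, opprK, mulrA, mulCii, mulN1r, mulr1, mul1r, oppr0, opprD);
  try ring.

Lemma BB : Bm *m Bm = 0. Proof. c3. Qed.
Lemma BcBc : Bc *m Bc = 0. Proof. c3. Qed.
Lemma BBcB : Bm *m Bc *m Bm = 6%:R *: Bm. Proof. rewrite -mulmxA. c3. Qed.

Lemma BcBBc : Bc *m Bm *m Bc = 6%:R *: Bc. Proof. rewrite -mulmxA. c3. Qed.
Definition w0 : 'rV[algC]_3 := \row_b (if val b == 2%N then - 2%:R else 1).
Definition r1 : 'rV[algC]_3 := \row_b 1.
Lemma w0B : w0 *m Bm = 0. Proof. c3. Qed.
Lemma w0Bc : w0 *m Bc = 0. Proof. c3. Qed.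
Lemma r1C : r1 *m (Bm *m Bc + Bc *m Bm) = 6%:R *: r1. Proof. rewrite mulmxDr !mulmxA. c3. Qed.


Section H.
Variable m : nat.
Definition sh : 'S_m := perm (@ordS_inj m).
Definition Pm : 'M[algC]_m := perm_mx sh.
Lemma PPt : Pm *m Pm^T = 1%:M.
Proof. by rewrite /Pm tr_perm_mx -perm_mxM mulgV perm_mx1. Qed.
Lemma PtP : Pm^T *m Pm = 1%:M.
Proof. by rewrite /Pm tr_perm_mx -perm_mxM mulVg perm_mx1. Qed.
Definition Hm : 'M[algC]_(m*3) := kron Pm Bm + kron Pm^T Bc.
Lemma H2 : Hm *m Hm = kron 1%:M (Bm *m Bc + Bc *m Bm).
Proof.
rewrite /Hm mulmxDl !mulmxDr !kron_mul PPt PtP BB BcBc !kron0r add0r addr0.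
by rewrite kronDr.
Qed.
Lemma H3 : Hm *m Hm *m Hm = 6%:R *: Hm.
Proof.
rewrite H2 /Hm mulmxDr !kron_mul !mul1mx !mulmxDl.
rewrite -[Bc *m Bm *m Bm]mulmxA -[Bm *m Bc *m Bc]mulmxA BB BcBc !mulmx0 addr0 add0r.
by rewrite BBcB BcBBc !kronZr scalerDr.
Qed.
End H.


Lemma ord11 (x y : 'I_(1*1)) : x = y.
Proof. by apply/val_inj; case: x => [[|?]//]; case: y => [[|?]//]. Qed.

Section Spec.
Variable k : nat.
Notation m := k.+2.
Let e : 'rV[algC]_m := delta_mx 0 0.

Lemma P00 : Pm m 0 0 = 0.
Proof.
rewrite /Pm /perm_mx !mxE /sh permE.
suff -> : (ordS (0 : 'I_m) == 0) = false by [].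
apply/negbTE; apply/eqP => /(congr1 val) /=; rewrite modn_small //.
Qed.

Lemma eig0 : eigenvalue (Hm m) 0.
Proof.
apply/eigenvalueP; exists (kron e w0 : 'rV_(m*3)).
  by rewrite scale0r /Hm mulmxDr !kron_mulr w0B w0Bc !kron0r addr0.
apply/eqP => /matrixP /(_ 0 (mxvec_index 0 0)).
rewrite kronE_row !mxE /=.
by move/eqP; rewrite mulr1 oner_eq0.
Qed.

Lemma eigc c : c ^+ 2 = 6%:R -> eigenvalue (Hm m) c.
Proof.
move=> hc; apply/eigenvalueP.
set y : 'rV_(m*3) := kron e r1.
exists (y *m Hm m + c *: y).
  rewrite mulmxDl -scalemxAl -mulmxA H2 /y kron_mulr mulmx1 r1C kronZr.
  by rewrite scalerDr scalerA -expr2 hc addrC.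
apply/eqP => /matrixP /(_ 0 (mxvec_index 0 0)).
rewrite /y /Hm mulmxDr !kron_mulr !mxE !kronE_row -!rowE.
rewrite [row 0 (Pm m) 0 0]mxE [row 0 (Pm m)^T 0 0]mxE [(Pm m)^T 0 0]mxE P00 [e 0 0]mxE [r1 0 0]mxE /=.
move/eqP; rewrite !mul0r !add0r !mulr1; apply/negP.
apply/eqP => c0; move: hc; rewrite c0 expr0n /= => /eqP; by rewrite eq_sym pnatr_eq0.
Qed.
End Spec.

Lemma eig_root (n : nat) (H : 'M[algC]_n) a :
  H *m H *m H = 6%:R *: H -> eigenvalue H a -> a ^+ 3 = 6%:R * a.
Proof.
move=> h3 /eigenvalueP [v hv nz].
have e1 : v *m (H *m H *m H) = (a ^+ 3) *: v.
  rewrite !mulmxA hv -!scalemxAl hv -!scalemxAl hv !scalerA.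
  by rewrite !exprS expr0 mulr1 mulrA.
move: e1; rewrite h3 -scalemxAr hv scalerA => /eqP.
rewrite -subr_eq0 -scalerBl scaler_eq0 (negbTE nz) orbF subr_eq0 => /eqP.
by [].
Qed.

Lemma spec3 k : n_distinct_eigenvalues (Hm k.+2) 3.
Proof.
set s6 := sqrtC (6%:R : algC).
have h6 : s6 ^+ 2 = 6%:R by rewrite sqrtCK.
have nz : s6 != 0 by rewrite sqrtC_eq0 pnatr_eq0.
have nzn : s6 != - s6.
  apply/eqP => /eqP; rewrite -subr_eq0 opprK -mulr2n -mulr_natr mulf_eq0 pnatr_eq0 orbF.
  by apply/negP.
exists [:: 0; s6; - s6]; split => //.
  rewrite /= !inE negb_or eq_sym nz /= eq_sym oppr_eq0 nz /=.
  by rewrite andbT.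
move=> a; split.
  move/(eig_root (H3 k.+2)) => ha.
  have : a * (a - s6) * (a + s6) == 0.
    have -> : a * (a - s6) * (a + s6) = a ^+ 3 - s6 ^+ 2 * a by ring.
    by rewrite h6 ha mulrC subrr.
  rewrite !mulf_eq0 subr_eq0 addr_eq0 !inE => /orP[/orP[]|] ->; rewrite ?orbT //.
rewrite !inE => /orP[/eqP ->|/orP[] /eqP ->]; first exact: eig0.
  exact: eigc.
by apply: eigc; rewrite sqrrN.
Qed.


Definition darcm m (x y : 'I_(m*3)) : bool :=
  (((mproj y).1 == ordS (mproj x).1) && (val (mproj y).2 == 0%N)) ||
  (((mproj x).1 == ordS (mproj y).1) && (val (mproj x).2 == 1%N)).

Lemma ordS_neq m (t : 'I_m) : (1 < m)%N -> (ordS t == t) = false.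
Proof.
move=> hm; apply/negbTE/eqP => /(congr1 val) /=.
have ht := ltn_ord t; move: (nat_of_ord t) ht => a ha.
have [h|h] : (a.+1 < m \/ a.+1 = m)%N by lia.
  by rewrite modn_small //; lia.
by rewrite h modnn; lia.
Qed.

Lemma ordSS m (t t' : 'I_m) : (2 < m)%N -> (t' == ordS t) && (t == ordS t') = false.
Proof.
move=> hm; apply/negbTE/negP => /andP[/eqP/(congr1 val) /= h1 /eqP/(congr1 val) /= h2].
have := ltn_ord t; have := ltn_ord t'; move: (nat_of_ord t) (nat_of_ord t') h1 h2 => a b h1 h2 hb ha.
have e1 : (a.+1 %% m = if a.+1 == m then 0 else a.+1)%N.
  by case: eqP => [->|?]; rewrite ?modnn ?modn_small //; lia.
have e2 : (b.+1 %% m = if b.+1 == m then 0 else b.+1)%N.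
  by case: eqP => [->|?]; rewrite ?modnn ?modn_small //; lia.
rewrite e1 in h1; rewrite e2 in h2; move: h1 h2; do 2 case: eqP; lia.
Qed.

Lemma darcm_irr k : irreflexive (@darcm k.+2).
Proof. by move=> x; rewrite /darcm eq_sym ordS_neq. Qed.

Definition Xd k := @Digraph (k.+2 * 3) (@darcm k.+2) (@darcm_irr k).

Lemma Pm_E m (t t' : 'I_m) : Pm m t t' = (ordS t == t')%:R.
Proof. by rewrite /Pm /perm_mx !mxE /sh permE. Qed.

Lemma hermXd k : hermAdj (Xd (k.+1)) = Hm k.+3.
Proof.
apply/matrixP => x y; case/mxvec_indexP: x => t s; case/mxvec_indexP: y => t' s'.
rewrite /hermAdj /Hm !mxE !kronE [_^T _ _]mxE !Pm_E /= /darcm !mprojK /=.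
rewrite [ordS t == t']eq_sym [ordS t' == t]eq_sym.
have := ordSS t t' (isT : (2 < k.+3)%N).
case: (t' == ordS t); case: (t == ordS t') => // _;
case: s => [[|[|[|//]]] ?]; case: s' => [[|[|[|//]]] ?]; rewrite !mxE /=;
by rewrite ?(mulr0, mul0r, addr0, add0r, mulr1, mul1r).
Qed.

Local Close Scope ring_scope.

Lemma valS m (t : 'I_m) : nat_of_ord (ordS t) = if t.+1 == m then 0 else t.+1.
Proof.
have := ltn_ord t; rewrite /=; move: (nat_of_ord t) => a ha.
by case: eqP => [->|?]; rewrite ?modnn ?modn_small //; lia.
Qed.

Lemma valS' m (t : 'I_m) : val (ordS t) = if t.+1 == m then 0 else t.+1.
Proof. exact: valS. Qed.

Section G.
Variable k : nat.
Notation m := k.+2.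
Notation X := (Xd k).
Notation e := (und_adj X).
Notation idx := (@mxvec_index m 3).

Lemma esymU : symmetric e.
Proof. by move=> x y; rewrite /und_adj orbC. Qed.

Lemma arc1 t s : e (idx t s) (idx (ordS t) ord0).
Proof. by rewrite /und_adj /= /darcm !mprojK /= eqxx. Qed.

Lemma conn_iter n : connect e (idx ord0 ord0) (idx (iter n (@ordS m) ord0) ord0).
Proof.
elim: n => [|n IH] /=; first exact: connect0.
apply: connect_trans IH _; apply: connect1; exact: arc1.
Qed.

Lemma iter_val (t : 'I_m) : iter t (@ordS m) ord0 = t.
Proof.
apply/val_inj.
suff h : forall n, (n < m)%N -> val (iter n (@ordS m) ord0) = n by rewrite h.
elim => [|n IH] hn //.
rewrite iterS valS' IH; last lia.
by case: eqP => //; lia.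
Qed.

Lemma conn0 z : connect e (idx ord0 ord0) z.
Proof.
case/mxvec_indexP: z => t s.
apply: connect_trans (conn_iter (ordS t)) _; rewrite iter_val.
rewrite (sym_connect_sym esymU); apply: connect1; exact: arc1.
Qed.

Lemma connX : gconnected e.
Proof.
move=> u v; apply: connect_trans (conn0 v).
by rewrite (sym_connect_sym esymU); apply: conn0.
Qed.

Lemma ball_lay r z : z \in ball e (idx ord0 ord0) r ->
  (nat_of_ord (mproj z).1 <= r \/ m <= nat_of_ord (mproj z).1 + r)%N.
Proof.
elim: r z => [|r IH] z /=.
  by rewrite inE => /eqP ->; rewrite mprojK; left.
rewrite inE => /orP[/IH|]; first lia.
rewrite in_set => /existsP [x /andP[/IH hx]].
rewrite /und_adj /= /darcm => /orP[]/orP[]/andP[/eqP/(congr1 (@nat_of_ord _)) h _];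
  move: hx h; rewrite valS; have := ltn_ord (mproj x).1; have := ltn_ord (mproj z).1;
  case: eqP; lia.
Qed.
End G.


Lemma diamX j : (j.+2 <= gdiameter (und_adj (Xd (j.*2.+2))))%N.
Proof.
set u := @mxvec_index (j.*2.+4) 3 ord0 ord0.
set v := @mxvec_index (j.*2.+4) 3 (inord j.+2) ord0.
apply: leq_trans (leq_bigmax u); apply: leq_trans (leq_bigmax v).
rewrite /gdist.
set P := (fun r => _).
set N := #|_|.
have [hlt|hge] := ltnP (find P (iota 0 N)) (size (iota 0 N)).
  have := nth_find 0 (a := P) (s := iota 0 N); rewrite has_find => /(_ hlt).
  rewrite nth_iota; last by rewrite size_iota in hlt.
  rewrite add0n /P => /ball_lay; rewrite /v mprojK /= inordK; last by rewrite -addnn; lia.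
  move: (find _ _) => n; rewrite -addnn; lia.

apply: leq_trans hge; rewrite size_iota /N card_ord /= -addnn; lia.
Qed.

Theorem corollary7p3 :
  exists X : nat -> digraph,
    (forall j, gconnected (und_adj (X j))) /\
    (forall M : nat, exists J : nat, forall j, (J <= j)%N ->
        (M <= gdiameter (und_adj (X j)))%N) /\
    (forall j, n_distinct_eigenvalues (hermAdj (X j)) 3).
Proof.
exists (fun j => Xd (j.*2.+2)); split; first by move=> j; exact: connX.
split.
  move=> M; exists M => j hj; apply: leq_trans (diamX j); lia.
by move=> j; rewrite hermXd; exact: spec3.
Qed.
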